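(* Let $D$ be the automaton built from complete DFAs $A,B,C$ as described in the context. For every state $(i,S)$ of $D$, the state $(i,\mathrm{Sat}(S))$ is equivalent to $(i,S)$.
   Context: Let $A=(\Sigma,Q_A=\{0,\dots,m-1\},0,F_A,\cdot)$, $B=(\Sigma,Q_B=\{q_0,\dots,q_{n-1}\},q_0,F_B,\cdot)$, $C=(\Sigma,Q_C=\{r_0,\dots,r_{p-1}\},r_0,F_C,\cdot)$ be complete DFAs. $D=(\Sigma,Q_A\times 2^{Q_B\times Q_C},i_D,F_D,\cdot)$ where $i_D=(0,\emptyset)$ if $0\notin F_A$ and $i_D=(0,\{(q_0,r_0)\})$ otherwise; $(i,S)\in F_D$ iff $S$ contains a pair $(q,r)$ with exactly one of $q\in F_B$, $r\in F_C$; and for $a\in\Sigma$, $(i,S)\cdot a=(i\cdot a,S\cdot a)$ if $i\cdot a\notin F_A$ and $(i\cdot a,S\cdot a\cup\{(q_0,r_0)\})$ otherwise, with $S\cdot a=\{(q\cdot a,r\cdot a):(q,r)\in S\}$. Two states are equivalent if no word leads exactly one of them to $F_D$. A tableau $S\subseteq Q_B\times Q_C$ is saturated if whenever $(q_x,r_{x'}),(q_x,r_{y'}),(q_y,r_{y'})\in S$ then $(q_y,r_{x'})\in S$; $\mathrm{Sat}(S)$ is the smallest saturated tableau containing $S$. *)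

(* Defs.v *)
From mathcomp Require Import all_boot.
Set Implicit Arguments. Unset Strict Implicit. Unset Printing Implicit Defensive.

Section Construction.
Variables (Sigma QA QB QC : finType).
Variables (a0 : QA) (FA : {set QA}) (dA : QA -> Sigma -> QA).
Variables (q0 : QB) (FB : {set QB}) (dB : QB -> Sigma -> QB).
Variables (r0 : QC) (FC : {set QC}) (dC : QC -> Sigma -> QC).

Definition tableau := {set QB * QC}.

Definition stateD := (QA * tableau)%type.

Definition tab_step (S : tableau) (a : Sigma) : tableau :=
  [set (dB p.1 a, dC p.2 a) | p in S].

Definition initD : stateD :=
  if a0 \in FA then (a0, [set (q0, r0)]) else (a0, set0).

Definition deltaD (x : stateD) (a : Sigma) : stateD :=
  let i' := dA x.1 a in
  if i' \in FA then (i', tab_step x.2 a :|: [set (q0, r0)])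
  else (i', tab_step x.2 a).

Definition runD (x : stateD) (w : seq Sigma) : stateD := foldl deltaD x w.

Definition finalD (x : stateD) : bool :=
  [exists p in x.2, (p.1 \in FB) != (p.2 \in FC)].

Definition equivD (x y : stateD) : Prop :=
  forall w : seq Sigma, finalD (runD x w) = finalD (runD y w).

Definition saturated (S : tableau) : bool :=
  [forall qx : QB, forall qy : QB, forall rx : QC, forall ry : QC,
    [&& (qx, rx) \in S, (qx, ry) \in S & (qy, ry) \in S] ==> ((qy, rx) \in S)].

Definition Sat (S : tableau) : tableau :=
  \bigcap_(T : tableau | saturated T && (S \subset T)) T.

End Construction.

(* Main.v *)
Require Import Defs.
From mathcomp Require Import all_boot.

Section Help.
Variables (Sigma QA QB QC : finType).
Variables (FA : {set QA}) (dA : QA -> Sigma -> QA).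
Variables (q0 : QB) (FB : {set QB}) (dB : QB -> Sigma -> QB).
Variables (r0 : QC) (FC : {set QC}) (dC : QC -> Sigma -> QC).

Lemma Sat_min (S U : {set QB * QC}) : saturated U -> S \subset U -> Sat S \subset U.
Proof. by move=> sU SU; by apply: bigcap_inf; rewrite sU SU. Qed.

Lemma sub_Sat (S : {set QB * QC}) : S \subset Sat S.
Proof. by apply/bigcapsP => T /andP[]. Qed.

Lemma Sat_mono (S T : {set QB * QC}) : S \subset T -> Sat S \subset Sat T.
Proof.
move=> ST; apply/bigcapsP => U /andP[sU TU]; apply: Sat_min => //.
exact: subset_trans ST TU.
Qed.

Lemma step_Sat (S : {set QB * QC}) a :
  tab_step dB dC (Sat S) a \subset Sat (tab_step dB dC S a).
Proof.
apply/bigcapsP => V /andP[sV SV].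
pose P := [set p : QB * QC | (dB p.1 a, dC p.2 a) \in V].
have : Sat S \subset P.
  apply: Sat_min.
    apply/forallP => qx; apply/forallP => qy; apply/forallP => rx; apply/forallP => ry.
    apply/implyP; rewrite !inE /= => /and3P[h1 h2 h3].
    by move/forallP: sV => /(_ (dB qx a)) /forallP /(_ (dB qy a)) /forallP
      /(_ (dC rx a)) /forallP /(_ (dC ry a)) /implyP; apply; rewrite h1 h2 h3.
  apply/subsetP => p pS; rewrite inE; apply: (subsetP SV).
  by apply/imsetP; exists p.
move/subsetP => h; apply/subsetP => z /imsetP[p pS ->].
by have := h p pS; rewrite inE.
Qed.

Lemma good_Sat (j : QA) (S : {set QB * QC}) :
  ~~ finalD FB FC (j, S) ->
  ~~ finalD FB FC (j, Sat S).
Proof.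
move=> nf.
pose G := [set p : QB * QC | (p.1 \in FB) == (p.2 \in FC)].
have : Sat S \subset G.
  apply: Sat_min.
    apply/forallP => qx; apply/forallP => qy; apply/forallP => rx; apply/forallP => ry.
    apply/implyP; rewrite !inE /= => /and3P[/eqP h1 /eqP h2 /eqP h3].
    by rewrite h3 -h2 h1.
  apply/subsetP => p pS; rewrite inE; apply/negPn/negP => np.
  by case/negP: nf; apply/existsP; exists p; rewrite /= pS.
move/subsetP => h; rewrite /finalD; apply/negP => /existsP[p /andP[pS np]].
by have := h p pS; rewrite inE (negbTE np).
Qed.

Lemma inv_step (x y : stateD QA QB QC) a :
  x.1 = y.1 -> y.2 \subset x.2 -> x.2 \subset Sat y.2 ->
  let x' := deltaD FA dA q0 dB r0 dC x a in
  let y' := deltaD FA dA q0 dB r0 dC y a in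
  [/\ x'.1 = y'.1, y'.2 \subset x'.2 & x'.2 \subset Sat y'.2].
Proof.
move=> e1 s1 s2 /=; rewrite /deltaD e1.
have m1 : tab_step dB dC y.2 a \subset tab_step dB dC x.2 a by apply: imsetS.
have m2 : tab_step dB dC x.2 a \subset Sat (tab_step dB dC y.2 a).
  apply: subset_trans (step_Sat _ _); exact: imsetS.
case: ifP => _ /=; split => //.
- by apply: setSU.
- rewrite subUset; apply/andP; split.
    apply: subset_trans m2 _; apply: Sat_mono; exact: subsetUl.
  apply: subset_trans (sub_Sat _); exact: subsetUr.
Qed.

End Help.

Theorem lemma5 (Sigma QA QB QC : finType)
  (a0 : QA) (FA : {set QA}) (dA : QA -> Sigma -> QA)
  (q0 : QB) (FB : {set QB}) (dB : QB -> Sigma -> QB)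
  (r0 : QC) (FC : {set QC}) (dC : QC -> Sigma -> QC)
  (i : QA) (S : {set QB * QC}) :
  equivD FA dA q0 FB dB r0 FC dC (i, Sat S) (i, S).
Proof.
move=> w; rewrite /runD.
have : [/\ (i, Sat S).1 = (i, S).1, (i, S).2 \subset (i, Sat S).2
          & (i, Sat S).2 \subset Sat (i, S).2].
  by split; [by [] | exact: sub_Sat | exact: subxx].
elim: w (i, Sat S) (i, S) => [|a w IH] x y /=.
  case: x y => [j X] [k Y] /= [_ s1 s2]; apply/idP/idP.
    apply: contraLR => nf.
    have := @good_Sat QA QB QC FB FC k Y nf; rewrite /finalD /=.
    apply: contra => /existsP[p /andP[pS np]]; apply/existsP; exists p.
    by rewrite np (subsetP s2).
  rewrite /finalD => /existsP[p /andP[pS np]]; apply/existsP; exists p.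
  by rewrite np (subsetP s1).
case=> e1 s1 s2; apply: IH; exact: inv_step.
Qed.
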